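(* Let $M,N:\Sigma\to cb(X)$ be multimeasures. Then $M$ is uniformly scalarly absolutely continuous with respect to $N$ if and only if $M$ is uniformly scalarly dominated by $N$; and if $M$ is uniformly scalarly subordinated to $N$, then $M$ is uniformly scalarly dominated by (hence uniformly scalarly absolutely continuous with respect to) $N$.
   Context: $(\Omega,\Sigma)$ is a measurable space and $X$ is a Hausdorff locally convex space with dual $X'$. $cb(X)$ is the family of nonempty closed bounded convex subsets of $X$; $s(x',C)=\sup\{\langle x',x\rangle:x\in C\}$. A multimeasure $M:\Sigma\to cb(X)$ is a map such that every $s(x',M(\cdot))$, $x'\in X'$, is a (finite, real-valued) countably additive measure. $-N$ denotes $E\mapsto\{-x:x\in N(E)\}$, so $s(x',-N(E))=s(-x',N(E))$. For a finite signed measure $\nu$, $|\nu|$ is its variation. $\Sigma_E=\{F\in\Sigma:F\subseteq E\}$, $A^c=\Omega\setminus A$, and for $S\subseteq\mathbb R$, $\overline{\mathrm{aco}}\,S$ is the closed absolutely convex hull. Quantifiers ''for all $x',y'$'' range over $X'$ (equivalently, by positive homogeneity of support functions, over the unit ball $B_{X'}$ when $X$ is normed). (usac) $M$ is uniformly scalarly absolutely continuous w.r.t. $N$ if there exists $A\in\Sigma$ such that for every $\varepsilon>0$ there is $\delta>0$ such that for all $\alpha,\beta\in\mathbb R$, all $x',y'$ and all $E\in\Sigma$: if $|\alpha s(x',N)+\beta s(y',N)|(E\cap A)+|\alpha s(x',-N)+\beta s(y',-N)|(E\cap A^c)\le\delta$ then $|\alpha s(x',M)+\beta s(y',M)|(E)\le\varepsilon$.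 (usd) $M$ is uniformly scalarly dominated by $N$ if there exist $c\in\mathbb R$ and $A\in\Sigma$ such that for all $\alpha,\beta,x',y',E$: $|\alpha s(x',M)+\beta s(y',M)|(E)\le c|\alpha s(x',N)+\beta s(y',N)|(E\cap A)+c|\alpha s(x',-N)+\beta s(y',-N)|(E\cap A^c)$. (uss) $M$ is uniformly scalarly subordinated to $N$ if there exist $d\ge0$ and $A\in\Sigma$ such that for all $\alpha,\beta,x',y',E$: $\alpha s(x',M(E))+\beta s(y',M(E))\in d\,\overline{\mathrm{aco}}\{\alpha s(x',N(F\cap A))+\beta s(y',N(F\cap A)):F\in\Sigma_E\}+d\,\overline{\mathrm{aco}}\{\alpha s(x',-N(F\cap A^c))+\beta s(y',-N(F\cap A^c)):F\in\Sigma_E\}$. *)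

(* Defs.v *)
From HB Require Import structures.
From mathcomp Require Import all_boot all_order all_algebra.
From mathcomp Require Import all_classical all_reals all_analysis.
Set Implicit Arguments. Unset Strict Implicit. Unset Printing Implicit Defensive.
Import Order.TTheory GRing.Theory Num.Theory.
Import numFieldNormedType.Exports.
Local Open Scope classical_set_scope.
Local Open Scope ring_scope.

Section Defs.
Variable R : realType.

Section Space.
Variable X : tvsType R.

Definition in_dual (f : X -> R) : Prop :=
  (forall (a : R) (x y : X), f (a *: x + y) = a * f x + f y) /\ continuous f.

Definition tvs_bounded (A : set X) : Prop :=
  forall U : set X, nbhs (0 : X) U ->
    exists r : R, 0 < r /\
      forall t : R, r < `|t| -> A `<=` [set t *: u | u in U].

Definition cb (C : set X) : Prop :=
  C !=set0 /\ closed C /\ tvs_bounded C /\ convex_set (C : set (convex_lmodType X)).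

Definition supp (f : X -> R) (C : set X) : R := sup [set f x | x in C].

Definition negset (C : set X) : set X := [set - x | x in C].

End Space.

Section Meas.
Context {d : measure_display} {T : measurableType d}.

Definition count_add (nu : set T -> R) : Prop :=
  forall F : nat -> set T, (forall n, measurable (F n)) -> trivIset setT F ->
    (fun n => \sum_(i < n) nu (F i)) @ \oo --> nu (\bigcup_n F n).

Definition multimeasure (X : tvsType R) (M : set T -> set X) : Prop :=
  (forall E, measurable E -> cb (M E)) /\
  (forall f : X -> R, in_dual f -> count_add (fun E => supp f (M E))).

Definition variation (nu : set T -> R) (E : set T) : \bar R :=
  ereal_sup [set x | exists (n : nat) (F : 'I_n -> set T),
     (forall i, measurable (F i)) /\ trivIset setT F /\
     \bigcup_i F i = E /\ x = (\sum_(i < n) `|nu (F i)|)%:E].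

Definition comb (X : tvsType R) (a b : R) (f g : X -> R) (M : set T -> set X)
  : set T -> R := fun E => a * supp f (M E) + b * supp g (M E).

Definition negmm (X : tvsType R) (N : set T -> set X) : set T -> set X :=
  fun E => negset (N E).

Definition usac (X : tvsType R) (M N : set T -> set X) : Prop :=
  exists A : set T, measurable A /\
  forall eps : R, 0 < eps -> exists delta : R, 0 < delta /\
  forall (a b : R) (f g : X -> R) (E : set T),
    in_dual f -> in_dual g -> measurable E ->
    (variation (comb a b f g N) (E `&` A)
       + variation (comb a b f g (negmm N)) (E `&` ~` A) <= delta%:E)%E ->
    (variation (comb a b f g M) E <= eps%:E)%E.

Definition usd (X : tvsType R) (M N : set T -> set X) : Prop :=
  exists (c : R) (A : set T), measurable A /\
  forall (a b : R) (f g : X -> R) (E : set T),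
    in_dual f -> in_dual g -> measurable E ->
    (variation (comb a b f g M) E <=
       c%:E * variation (comb a b f g N) (E `&` A)
       + c%:E * variation (comb a b f g (negmm N)) (E `&` ~` A))%E.

End Meas.

Definition aco (S : set R) : set R :=
  [set x | exists (n : nat) (s l : 'I_n -> R),
     (forall i, S (s i)) /\ \sum_(i < n) `|l i| <= 1 /\
     x = \sum_(i < n) l i * s i].

Definition caco (S : set R) : set R := closure (aco S).

Definition scaled_sum (c : R) (A B : set R) : set R :=
  [set x | exists a b, A a /\ B b /\ x = c * a + c * b].

Definition uss {d : measure_display} {T : measurableType d} (X : tvsType R)
  (M N : set T -> set X) : Prop :=
  exists (c : R) (A : set T), 0 <= c /\ measurable A /\
  forall (a b : R) (f g : X -> R) (E : set T),
    in_dual f -> in_dual g -> measurable E ->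
    scaled_sum c
      (caco [set comb a b f g N (F `&` A) | F in [set F | measurable F /\ F `<=` E]])
      (caco [set comb a b f g (negmm N) (F `&` ~` A)
               | F in [set F | measurable F /\ F `<=` E]])
      (comb a b f g M E).

End Defs.

(* Main.v *)
From Pilot Require Import Defs.
From HB Require Import structures.
From mathcomp Require Import all_boot all_order all_algebra.
From mathcomp Require Import all_classical all_reals all_analysis.
From mathcomp Require Import ring lra.
Import Order.TTheory GRing.Theory Num.Theory.
Import numFieldNormedType.Exports.
Set Implicit Arguments. Unset Strict Implicit.
Local Open Scope classical_set_scope.
Local Open Scope ring_scope.

Local Notation variation := Pilot.Defs.variation.
Section Aux.
Variables (R : realType) (d : measure_display) (T : measurableType d).

Lemma var_part (nu : set T -> R) (D : set T) n (G : 'I_n -> set T) :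
  measurable D -> (forall i, measurable (G i)) -> trivIset setT G ->
  (forall i, G i `<=` D) ->
  (((\sum_(i < n) `|nu (G i)|)%R)%:E <= variation nu D)%E.
Proof.
move=> mD mG tG GD.
pose U := \bigcup_(i in [set: 'I_n]) G i.
have UE x : U x <-> exists i, G i x.
  by split=> [[i _ Gi]|[i Gi]]; exists i.
have mU : measurable U by apply: fin_bigcup_measurable => //; exact: finite_finset.
pose H (j : 'I_n.+1) := if unlift ord_max j is Some i then G i else D `\` U.
apply: (@le_trans _ _ ((\sum_(j < n.+1) `|nu (H j)|)%R)%:E).
  rewrite lee_fin big_ord_recr /= -[X in X <= _]addr0 lerD //.
  apply: ler_sum => i _; rewrite /H.
  have -> : widen_ord (leqnSn n) i = lift ord_max i by apply: val_inj; rewrite /= /bump leqNgt ltn_ord.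
  by rewrite liftK.
apply: ereal_sup_ubound; exists n.+1, H; split; [|split; [|split]] => //.
- move=> j; rewrite /H; case: unliftP => [i _|_] //; exact: measurableD.
- move=> j k _ _; rewrite /H; case: unliftP => [i ->|->]; case: unliftP => [i' ->|->] //.
  + by move=> /(tG _ _ I I) ->.
  + by case=> x [Gx [_ nU]]; exfalso; apply: nU; exists i.
  + by case=> x [[_ nU] Gx]; exfalso; apply: nU; exists i'.
- apply/seteqP; split => x.
  + by case=> j _; rewrite /H; case: unliftP => [i _|_] //; [apply: GD|case].
  + move=> Dx; have [/UE [i Gi]|nU] := pselect (U x).
    * by exists (lift ord_max i) => //; rewrite /H liftK.
    * by exists ord_max => //; rewrite /H unlift_none.
Qed.

Lemma var_ge0 (nu : set T -> R) D : measurable D -> (0 <= variation nu D)%E.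
Proof.
move=> mD; have := @var_part nu D 0 (fun _ => set0) mD (fun _ => measurable0).
rewrite big_ord0; apply => //; [by move=> [] | by move=> i; case: i].

Qed.

Lemma var_scale_le (mu nu : set T -> R) (lam : R) D : 0 < lam ->
  (forall F, mu F = lam * nu F) ->
  (variation mu D <= lam%:E * variation nu D)%E.
Proof.
move=> l0 mn; apply: ge_ereal_sup => _ [n [F [mF [tF [UF ->]]]]].
have -> : (\sum_(i < n) `|mu (F i)|) = lam * \sum_(i < n) `|nu (F i)|.
  rewrite mulr_sumr; apply: eq_bigr => i _; by rewrite mn normrM gtr0_norm.
rewrite EFinM; apply: lee_wpmul2l; first by rewrite lee_fin ltW.
by apply: ereal_sup_ubound; exists n, F.
Qed.

Lemma var_scale_ge (mu nu : set T -> R) (lam r : R) D : 0 < lam ->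
  (forall F, mu F = lam * nu F) ->
  (variation mu D <= r%:E)%E -> (variation nu D <= (r / lam)%:E)%E.
Proof.
move=> l0 mn H; apply: ge_ereal_sup => _ [n [F [mF [tF [UF ->]]]]].
have : ((\sum_(i < n) `|mu (F i)|)%R%:E <= r%:E)%E.
  by apply: le_trans H; apply: ereal_sup_ubound; exists n, F.
have -> : (\sum_(i < n) `|mu (F i)|) = lam * \sum_(i < n) `|nu (F i)|.
  rewrite mulr_sumr; apply: eq_bigr => i _; by rewrite mn normrM gtr0_norm.
by rewrite !lee_fin ler_pdivlMr // mulrC.
Qed.
End Aux.

Lemma comb_scale (R : realType) (d : measure_display) (T : measurableType d)
  (X : tvsType R) lam a b (f g : X -> R) (M : set T -> set X) F :
  comb (lam * a) (lam * b) f g M F = lam * comb a b f g M F.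
Proof. by rewrite /comb mulrDr !mulrA. Qed.

Lemma caco_bound (R : realType) (S : set R) (r z : R) : 0 <= r ->
  (forall s, S s -> `|s| <= r) -> caco S z -> `|z| <= r.
Proof.
move=> r0 Sb; rewrite /caco.
have cl : closed [set x : R | `|x| <= r].
  have -> : [set x : R | `|x| <= r] = [set x | - r <= x] `&` [set x | x <= r].
    by apply/seteqP; split => x /=; rewrite ler_norml => /andP.
  exact: closedI (@closed_ge _ _) (@closed_le _ _).
suff sub : aco S `<=` [set x : R | `|x| <= r].
  by move=> /(closure_subset sub); rewrite -(proj1 (closure_id _) cl).
move=> _ [n [s [l [Ss [sl ->]]]]].
apply: (le_trans (ler_norm_sum _ _ _)).
apply: (@le_trans _ _ (\sum_(i < n) `|l i| * r)).
  apply: ler_sum => i _; rewrite normrM; apply: ler_wpM2l => //; exact: Sb.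
by rewrite -mulr_suml; apply: (le_trans (ler_wpM2r r0 sl)); rewrite mul1r.
Qed.


Local Open Scope ereal_scope.
Lemma usd_usac (R : realType) (d : measure_display) (T : measurableType d)
  (X : tvsType R) (M N : set T -> set X) : usd M N -> usac M N.
Proof.
move=> [c [A [mA H]]]; exists A; split => // eps e0.
exists (eps / (`|c| + 1))%R; split; first by rewrite divr_gt0 // ltr_wpDl.
move=> a b f g E fd gd mE.
have mEA : measurable (E `&` A) by exact: measurableI.
have mEAc : measurable (E `&` ~` A) by apply: measurableI => //; exact: measurableC.
move: (H a b f g E fd gd mE) (var_ge0 (comb a b f g N) mEA) (var_ge0 (comb a b f g (negmm N)) mEAc).
case: (variation (comb a b f g N) (E `&` A)) => [x||];
case: (variation (comb a b f g (negmm N)) (E `&` ~` A)) => [y||] //=.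
move=> HV; rewrite -EFinD !lee_fin => x0 y0 hxy; apply: le_trans HV _.
rewrite -!EFinM -EFinD lee_fin.
have c1 : (0 < `|c| + 1)%R by rewrite ltr_wpDl.
move: hxy; rewrite ler_pdivlMr // => hxy.
have cc : (c <= `|c|)%R by rewrite ler_norm.
have cc' : (0 <= `|c|)%R by [].
nra.
Qed.

Lemma usac_usd (R : realType) (d : measure_display) (T : measurableType d)
  (X : tvsType R) (M N : set T -> set X) : usac M N -> usd M N.
Proof.
move=> [A [mA H]]; have [delta [dp Hd]] := H 1%R ltr01.
exists (delta^-1)%R, A; split => // a b f g E fd gd mE.
have mEA : measurable (E `&` A) by exact: measurableI.
have mEAc : measurable (E `&` ~` A) by apply: measurableI => //; exact: measurableC.
have key : forall lam : R, (0 < lam)%R ->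
  variation (comb (lam * a) (lam * b) f g N) (E `&` A) +
  variation (comb (lam * a) (lam * b) f g (negmm N)) (E `&` ~` A) <=
  lam%:E * variation (comb a b f g N) (E `&` A) +
  lam%:E * variation (comb a b f g (negmm N)) (E `&` ~` A).
  by move=> lam l0; apply: leeD; apply: var_scale_le => // F; rewrite comb_scale.
have keyM : forall lam : R, (0 < lam)%R ->
  variation (comb (lam * a) (lam * b) f g M) E <= 1%:E ->
  variation (comb a b f g M) E <= (1 / lam)%:E.
  by move=> lam l0; apply: var_scale_ge => // F; rewrite comb_scale.
have di : (0 < delta^-1)%R by rewrite invr_gt0.
move: key (var_ge0 (comb a b f g N) mEA) (var_ge0 (comb a b f g (negmm N)) mEAc).
case: (variation (comb a b f g N) (E `&` A)) => [x||];
case: (variation (comb a b f g (negmm N)) (E `&` ~` A)) => [y||] //=;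
  idtac.
- move=> key' x0 y0; rewrite !lee_fin in x0 y0.
  rewrite -!EFinM -EFinD; apply/lee_addgt0Pr => e e0.
  have s0 : (0 < x + y + e * delta)%R.
    by apply: ltr_wpDl; [apply: addr_ge0|apply: mulr_gt0].
  pose lam := (delta / (x + y + e * delta))%R.
  have l0 : (0 < lam)%R by apply: divr_gt0.
  have hl : variation (comb (lam * a) (lam * b) f g M) E <= 1%:E.
    apply: Hd => //; apply: le_trans (key' lam l0) _.
    rewrite -!EFinM -EFinD lee_fin -mulrDr /lam mulrAC ler_pdivrMr //.
    by apply: ler_wpM2l; [apply: ltW|rewrite lerDl; apply: ltW; apply: mulr_gt0].
  apply: le_trans (keyM lam l0 hl) _; rewrite -EFinD lee_fin le_eqVlt; apply/orP; left.
  apply/eqP; rewrite /lam; field.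
  by apply/andP; split; apply: lt0r_neq0.
- have hinf : (delta^-1)%:E * +oo = +oo :> \bar R by rewrite mulry gtr0_sg // mul1e.
  by move=> _ _ _; rewrite hinf -EFinM addey // leey.
- have hinf : (delta^-1)%:E * +oo = +oo :> \bar R by rewrite mulry gtr0_sg // mul1e.
  by move=> _ _ _; rewrite hinf -EFinM addye // leey.
- have hinf : (delta^-1)%:E * +oo = +oo :> \bar R by rewrite mulry gtr0_sg // mul1e.
  by move=> _ _ _; rewrite !hinf addye // leey.
Qed.

Local Close Scope ereal_scope.
Lemma sum_bound (R : realType) (d : measure_display) (T : measurableType d)
  (nu : set T -> R) B E (x : R) n (G : 'I_n -> set T) (a : 'I_n -> R) :
  measurable B -> measurable E -> (forall i, measurable (G i)) ->
  trivIset setT G -> (forall i, G i `<=` E) ->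
  (variation nu (E `&` B) <= x%:E)%E ->
  (forall i, caco [set nu (F `&` B) | F in [set F | measurable F /\ F `<=` G i]] (a i)) ->
  \sum_(i < n) `|a i| <= x.
Proof.
move=> mB mE mG tG GE hx ha; apply/ler_addgt0Pr => e e0.
pose eps := e / n.+1%:R.
have eps0 : 0 < eps by apply: divr_gt0.
have pick : forall i, exists F, (measurable F /\ F `<=` G i) /\
    `|a i| - eps < `|nu (F `&` B)|.
  move=> i; apply: contrapT => hno.
  have hb : forall s, [set nu (F `&` B) | F in [set F | measurable F /\ F `<=` G i]] s ->
      `|s| <= `|a i| - eps.
    move=> _ [F hF <-]; rewrite leNgt; apply/negP => hlt; apply: hno; by exists F.
  have r0 : 0 <= `|a i| - eps.
    apply: le_trans (hb (nu (set0 `&` B)) _) => //.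
    by exists set0 => //; split => //; exact: sub0set.
  have := caco_bound r0 hb (ha i); lra.
have [F hF] := choice pick.
have hsum : \sum_(i < n) `|nu (F i `&` B)| <= x.
  rewrite -lee_fin; apply: le_trans hx.
  apply: var_part.
  - exact: measurableI.
  - by move=> i; apply: measurableI => //; exact: (proj1 (proj1 (hF i))).
  - move=> i j _ _ [y [[Fi _] [Fj _]]]; apply: tG => //; exists y; split.
    + exact: (proj2 (proj1 (hF i))).
    + exact: (proj2 (proj1 (hF j))).
  - by move=> i y [Fy By]; split => //; apply: GE; apply: (proj2 (proj1 (hF i))).
apply: (@le_trans _ _ (\sum_(i < n) (`|nu (F i `&` B)| + eps))).
  by apply: ler_sum => i _; have := proj2 (hF i); lra.
rewrite big_split /= sumr_const card_ord lerD //.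
rewrite -mulr_natr /eps mulrAC ler_pdivrMr ?ltr0Sn // ler_wpM2l ?(ltW e0) //.
by rewrite ler_nat.
Qed.

Lemma uss_usd (R : realType) (d : measure_display) (T : measurableType d)
  (X : tvsType R) (M N : set T -> set X) : uss M N -> usd M N.
Proof.
move=> [c [A [c0 [mA H]]]]; exists (c + 1), A; split => // a b f g E fd gd mE.
have mEA : measurable (E `&` A) by exact: measurableI.
have mAc : measurable (~` A) by exact: measurableC.
have mEAc : measurable (E `&` ~` A) by apply: measurableI.
have c1 : 0 < c + 1 by rewrite ltr_wpDl.
have main : forall x y : R,
  (variation (comb a b f g N) (E `&` A) <= x%:E)%E ->
  (variation (comb a b f g (negmm N)) (E `&` ~` A) <= y%:E)%E ->
  (variation (comb a b f g M) E <= (c * x + c * y)%:E)%E.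
  move=> x y hx hy; apply: ge_ereal_sup => _ [n [G [mG [tG [UG ->]]]]].
  rewrite lee_fin.
  have GE i : G i `<=` E by rewrite -UG => z Gz; exists i.
  have [al hal] := choice (fun i => H a b f g (G i) fd gd (mG i)).
  have [bl hbl] := choice hal.
  have sa : \sum_(i < n) `|al i| <= x.
    apply: (sum_bound mA mE mG tG GE hx) => i; exact: (proj1 (hbl i)).
  have sb : \sum_(i < n) `|bl i| <= y.
    apply: (sum_bound mAc mE mG tG GE hy) => i; exact: (proj1 (proj2 (hbl i))).
  apply: (@le_trans _ _ (\sum_(i < n) (c * `|al i| + c * `|bl i|))).
    apply: ler_sum => i _; rewrite (proj2 (proj2 (hbl i))).
    apply: (le_trans (ler_normD _ _)); rewrite !normrM ger0_norm //.
  rewrite big_split /= -!mulr_sumr lerD // ler_wpM2l //.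
move: main (var_ge0 (comb a b f g N) mEA) (var_ge0 (comb a b f g (negmm N)) mEAc).
have hinf : ((c + 1)%:E * +oo = +oo :> \bar R)%E by rewrite mulry gtr0_sg // mul1e.
case: (variation (comb a b f g N) (E `&` A)) => [x||];
case: (variation (comb a b f g (negmm N)) (E `&` ~` A)) => [y||] //=.
- move=> main x0 y0; apply: le_trans (main x y (le_refl _) (le_refl _)) _.
  rewrite -!EFinM -EFinD lee_fin; rewrite !lee_fin in x0 y0.
  by apply: lerD; apply: ler_wpM2r => //; rewrite lerDl.
- by move=> _ _ _; rewrite hinf -EFinM addey // leey.
- by move=> _ _ _; rewrite hinf -EFinM addye // leey.
- by move=> _ _ _; rewrite !hinf addye // leey.
Qed.

Unset Implicit Arguments.
Theorem proposition4p3 (R : realType) (d : measure_display) (T : measurableType d)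
  (X : tvsType R) (M N : set T -> set X) :
  hausdorff_space X -> multimeasure M -> multimeasure N ->
  (usac M N <-> usd M N) /\ (uss M N -> usd M N).
Proof.
move=> _ _ _; split; [split; [exact: usac_usd|exact: usd_usac]|exact: uss_usd].
Qed.
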